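(* Let $m,g\geq3$ be odd integers, $n=mg$ and $k=1+(m-1)g$, and let $A$ be a cyclically $k$-diagonal $n\times n$ array. Then there exists a solution to $P(A)$.
   Context: Arrays are partially filled and toroidal; $F(A)$ is the set of filled cells. $s_R(i,j)=(i,j+t)$, $s_C(i,j)=(i+t,j)$ with $t\ge1$ minimal such that the cell is filled. For $R,C\in\{-1,1\}^n$, $CN_{RC}(i,j)=s_C^{c_{j'}}(i,j')$ where $(i,j')=s_R^{r_i}(i,j)$. A solution to $P(A)$ is a pair $R,C$ such that $CN_{RC}$ is a permutation of $F(A)$ forming a single cycle of length $|F(A)|$. An $n\times n$ array is cyclically $k$-diagonal if its filled cells are exactly the $(i,j)$ with $i-j\bmod n\in\{0,\dots,k-1\}$. *)

(* Defs.v *)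
From mathcomp Require Import all_boot all_algebra.
Set Implicit Arguments. Unset Strict Implicit. Unset Printing Implicit Defensive.

(* Arrays are n x n, toroidal; a partially filled array is identified with
   its set of filled cells F(A) : {set 'I_n * 'I_n}. Rows/columns indexed 0..n-1. *)

Lemma ord_pos n (j : 'I_n) : 0 < n.
Proof. exact: leq_ltn_trans (leq0n j) (ltn_ord j). Qed.

Definition shiftf n (j : 'I_n) (t : nat) : 'I_n :=
  Ordinal (ltn_pmod (j + t) (ord_pos j)).
(* j - t  (mod n), for 0 <= t <= n *)
Definition shiftb n (j : 'I_n) (t : nat) : 'I_n :=
  Ordinal (ltn_pmod (j + (n - t)) (ord_pos j)).

(* s_R : (i,j) |-> (i, j+t), t >= 1 minimal with (i,j+t) filled.
   Toroidally the minimal t (if one exists) lies in 1..n; for a filled cell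
   t = n always works, so the search over 1..n is exact. *)
Definition sR n (A : {set 'I_n * 'I_n}) (c : 'I_n * 'I_n) : 'I_n * 'I_n :=
  let t := (find (fun t => (c.1, shiftf c.2 t) \in A) (iota 1 n)).+1 in
  (c.1, shiftf c.2 t).
Definition sRinv n (A : {set 'I_n * 'I_n}) (c : 'I_n * 'I_n) : 'I_n * 'I_n :=
  let t := (find (fun t => (c.1, shiftb c.2 t) \in A) (iota 1 n)).+1 in
  (c.1, shiftb c.2 t).
Definition sC n (A : {set 'I_n * 'I_n}) (c : 'I_n * 'I_n) : 'I_n * 'I_n :=
  let t := (find (fun t => (shiftf c.1 t, c.2) \in A) (iota 1 n)).+1 in
  (shiftf c.1 t, c.2).
Definition sCinv n (A : {set 'I_n * 'I_n}) (c : 'I_n * 'I_n) : 'I_n * 'I_n :=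
  let t := (find (fun t => (shiftb c.1 t, c.2) \in A) (iota 1 n)).+1 in
  (shiftb c.1 t, c.2).

Definition sR_pow n A (e : int) (c : 'I_n * 'I_n) :=
  if e == 1%R then sR A c else sRinv A c.
Definition sC_pow n A (e : int) (c : 'I_n * 'I_n) :=
  if e == 1%R then sC A c else sCinv A c.

Definition CN n (A : {set 'I_n * 'I_n}) (R C : 'I_n -> int) (c : 'I_n * 'I_n) :=
  let c' := sR_pow A (R c.1) c in sC_pow A (C c'.2) c'.

Definition sign_vec n (R : 'I_n -> int) := forall i, R i = 1%R \/ R i = (-1)%R.

(* (R,C) is a solution to P(A): R,C in {-1,1}^n and CN_{RC} is a permutation
   of F(A) forming a single cycle of length |F(A)|. *)
Definition is_solution n (A : {set 'I_n * 'I_n}) (R C : 'I_n -> int) : Prop :=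
  [/\ sign_vec R, sign_vec C,
      (forall x, x \in A -> CN A R C x \in A),
      {in A &, injective (CN A R C)} &
      (forall x y, x \in A -> y \in A -> exists k, iter k (CN A R C) x = y)].

Definition cyc_diag n (k : nat) (A : {set 'I_n * 'I_n}) : Prop :=
  forall c : 'I_n * 'I_n, (c \in A) = ((c.1 + (n - c.2)) %% n < k).

(* Main.v *)
Require Import Defs.
From mathcomp Require Import all_boot all_algebra.
From mathcomp Require Import zify.
Set Implicit Arguments. Unset Strict Implicit. Unset Printing Implicit Defensive.

Lemma modn_2 (x n : nat) : x < n + n -> x %% n = if x < n then x else x - n.
Proof.
move=> h; case: ifP => hx; first by rewrite modn_small.
have e : x = (x - n) + n by lia.
rewrite {1}e modnDr modn_small //; lia.
Qed.

Definition Dn (n i j : nat) := (i + (n - j)) %% n.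

Lemma Dval n i j : i < n -> j < n -> Dn n i j = if j <= i then i - j else i + n - j.
Proof.
move=> hi hj; rewrite /Dn modn_2; last by lia.
case: ifP; case: ifP => *; lia.
Qed.

Lemma find_iota1 (p : pred nat) n t0 :
  1 <= t0 <= n -> p t0 -> (forall s, 1 <= s < t0 -> ~~ p s) ->
  find p (iota 1 n) = t0.-1.
Proof.
move=> /andP[h1 h2] pt hs.
have gen : forall i a N, (forall s, a <= s < a + i -> ~~ p s) -> p (a + i) -> i < N ->
  find p (iota a N) = i.
  elim=> [|i IH] a [|N] //= hb hp hN.
  - by rewrite addn0 in hp; rewrite hp.
  - have -> : p a = false.
      by apply/negbTE; apply: hb; lia.
    congr S; apply: IH; last by lia.
    + move=> s hs1; apply: hb; lia.
    + by rewrite addSnnS.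
have := gen t0.-1 1 n; rewrite -[1 + t0.-1]/(t0.-1.+1) prednK //; apply; last by lia.
- move=> s hs2; apply: hs; lia.
- by [].
Qed.

Lemma ift_ (A : Type) (a b : A) : (if true then a else b) = a. Proof. by []. Qed.
Lemma iff_ (A : Type) (a b : A) : (if false then a else b) = b. Proof. by []. Qed.
Ltac ifs_dest b := lazymatch b with true => fail | false => fail | _ => let E := fresh "E" in destruct b eqn:E; cbv iota in * end.
Ltac ifs := repeat (match goal with
 | |- context[if ?b then _ else _] => ifs_dest b
 | H : context[if ?b then _ else _] |- _ => ifs_dest b
 end).

Lemma D_col n i j s : i < n -> j < n -> s <= n ->
  Dn n i ((j + s) %% n) = if s <= Dn n i j then Dn n i j - s else Dn n i j + n - s.
Proof.
move=> hi hj hs.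
have hj' : (j + s) %% n < n by apply: ltn_pmod; lia.
rewrite !Dval //; rewrite modn_2; last by lia.
ifs; lia.
Qed.

Lemma D_rowf n i j s : i < n -> j < n -> s <= n ->
  Dn n ((i + s) %% n) j = if Dn n i j + s < n then Dn n i j + s else Dn n i j + s - n.
Proof.
move=> hi hj hs.
have hi' : (i + s) %% n < n by apply: ltn_pmod; lia.
rewrite !Dval //; rewrite modn_2; last by lia.
ifs; lia.
Qed.

Lemma D_rowb n i j s : i < n -> j < n -> s <= n ->
  Dn n ((i + (n - s)) %% n) j = if s <= Dn n i j then Dn n i j - s else Dn n i j + n - s.
Proof.
move=> hi hj hs.
have hi' : (i + (n - s)) %% n < n by apply: ltn_pmod; lia.
rewrite !Dval //; rewrite modn_2; last by lia.
ifs; lia.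
Qed.


Lemma sR_eq n k g (A : {set 'I_n * 'I_n}) (HA : cyc_diag k A) (c : 'I_n * 'I_n) :
  n = k + g - 1 -> 1 <= g -> Dn n c.1 c.2 < k ->
  sR A c = (c.1, shiftf c.2 (if Dn n c.1 c.2 == 0 then g else 1)).
Proof.
move=> hn hg hd.
have hi := ltn_ord c.1; have hj := ltn_ord c.2.
rewrite /sR; congr pair; congr shiftf.
set t0 := (if _ then _ else _).
rewrite (@find_iota1 _ _ t0) ?prednK //.
- rewrite /t0; case: ifP => _; lia.
- rewrite /t0; case: ifP => _; lia.
- rewrite HA /= -/(Dn n _ _) D_col //; last by rewrite /t0; case: ifP => _; lia.
  rewrite /t0; ifs; lia.
- move=> s hs; rewrite HA /= -/(Dn n _ _) D_col //; last by rewrite /t0 in hs; move: hs; case: ifP => _; lia.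
  move: hs; rewrite /t0; ifs; lia.
Qed.

Lemma sC_eq n k g (A : {set 'I_n * 'I_n}) (HA : cyc_diag k A) (c : 'I_n * 'I_n) :
  n = k + g - 1 -> 1 <= g -> Dn n c.1 c.2 < k ->
  sC A c = (shiftf c.1 (if Dn n c.1 c.2 == k.-1 then g else 1), c.2).
Proof.
move=> hn hg hd.
have hi := ltn_ord c.1; have hj := ltn_ord c.2.
rewrite /sC; congr pair; congr shiftf.
set t0 := (if _ then _ else _).
rewrite (@find_iota1 _ _ t0) ?prednK //.
- rewrite /t0; case: ifP => _; lia.
- rewrite /t0; case: ifP => _; lia.
- rewrite HA /= -/(Dn n _ _) D_rowf //; last by rewrite /t0; case: ifP => _; lia.
  rewrite /t0; ifs; lia.
- move=> s hs; rewrite HA /= -/(Dn n _ _) D_rowf //; last by rewrite /t0 in hs; move: hs; case: ifP => _; lia.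
  move: hs; rewrite /t0; ifs; lia.
Qed.

Lemma sCinv_eq n k g (A : {set 'I_n * 'I_n}) (HA : cyc_diag k A) (c : 'I_n * 'I_n) :
  n = k + g - 1 -> 1 <= g -> Dn n c.1 c.2 < k ->
  sCinv A c = (shiftb c.1 (if Dn n c.1 c.2 == 0 then g else 1), c.2).
Proof.
move=> hn hg hd.
have hi := ltn_ord c.1; have hj := ltn_ord c.2.
rewrite /sCinv; congr pair; congr shiftb.
set t0 := (if _ then _ else _).
rewrite (@find_iota1 _ _ t0) ?prednK //.
- rewrite /t0; case: ifP => _; lia.
- rewrite /t0; case: ifP => _; lia.
- rewrite HA /= -/(Dn n _ _) D_rowb //; last by rewrite /t0; case: ifP => _; lia.
  rewrite /t0; ifs; lia.
- move=> s hs; rewrite HA /= -/(Dn n _ _) D_rowb //; last by rewrite /t0 in hs; move: hs; case: ifP => _; lia.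
  move: hs; rewrite /t0; ifs; lia.
Qed.

Definition jd n (c : 'I_n * 'I_n) := (nat_of_ord c.2, Dn n c.1 c.2).
Definition Cv n k (j : 'I_n) : int :=
  if (nat_of_ord j == 0) || (nat_of_ord j == k) then 1%R else (-1)%R.
Definition TJD g k n (p : nat * nat) :=
  let j := p.1 in let d := p.2 in
  let j' := if d == 0 then (if j + g < n then j + g else j + g - n)
            else (if j.+1 < n then j.+1 else 0) in
  (j', if (j' == 0) || (j' == k) then d else (if 2 <= d then d - 2 else d + k - 2)).


Lemma sR_jd n k g (A : {set 'I_n * 'I_n}) (HA : cyc_diag k A) (c : 'I_n * 'I_n) :
  n = k + g - 1 -> 3 <= g -> g < k -> Dn n c.1 c.2 < k ->
  jd (sR A c) = (if Dn n c.1 c.2 == 0 then (if c.2 + g < n then c.2 + g else c.2 + g - n)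
                 else (if c.2.+1 < n then c.2.+1 else 0),
                 if Dn n c.1 c.2 == 0 then k.-1 else (Dn n c.1 c.2).-1).
Proof.
move=> hn hg hgk hd.
have hi := ltn_ord c.1; have hj := ltn_ord c.2.
rewrite (@sR_eq n k g A HA c hn) //; last lia.
rewrite /jd /= D_col //; last by case: ifP => _; lia.
rewrite modn_2; last by case: ifP => _; lia.
case: (Dn n c.1 c.2 =P 0) => h0; congr pair; ifs; lia.
Qed.

Lemma sC_jd n k g (A : {set 'I_n * 'I_n}) (HA : cyc_diag k A) (c : 'I_n * 'I_n) :
  n = k + g - 1 -> 3 <= g -> g < k -> Dn n c.1 c.2 < k ->
  jd (sC A c) = (nat_of_ord c.2, if Dn n c.1 c.2 == k.-1 then 0 else (Dn n c.1 c.2).+1).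
Proof.
move=> hn hg hgk hd.
have hi := ltn_ord c.1; have hj := ltn_ord c.2.
rewrite (@sC_eq n k g A HA c hn) //; last lia.
rewrite /jd /= D_rowf //; last by case: ifP => _; lia.
case: (Dn n c.1 c.2 =P k.-1) => h0; congr pair; ifs; lia.
Qed.

Lemma sCinv_jd n k g (A : {set 'I_n * 'I_n}) (HA : cyc_diag k A) (c : 'I_n * 'I_n) :
  n = k + g - 1 -> 3 <= g -> g < k -> Dn n c.1 c.2 < k ->
  jd (sCinv A c) = (nat_of_ord c.2, if Dn n c.1 c.2 == 0 then k.-1 else (Dn n c.1 c.2).-1).
Proof.
move=> hn hg hgk hd.
have hi := ltn_ord c.1; have hj := ltn_ord c.2.
rewrite (@sCinv_eq n k g A HA c hn) //; last lia.
rewrite /jd /= D_rowb //; last by case: ifP => _; lia.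
case: (Dn n c.1 c.2 =P 0) => h0; congr pair; ifs; lia.
Qed.

Lemma CN_jd n k g (A : {set 'I_n * 'I_n}) (HA : cyc_diag k A) (c : 'I_n * 'I_n) :
  n = k + g - 1 -> 3 <= g -> g < k -> Dn n c.1 c.2 < k ->
  jd (CN A (fun _ => 1%R) (@Cv n k) c) = TJD g k n (jd c).
Proof.
move=> hn hg hgk hd.
rewrite /CN /sR_pow eqxx.
set c' := sR A c.
have e1 := @sR_jd n k g A HA c hn hg hgk hd.
have e1a : nat_of_ord c'.2 = (jd c').1 by [].
have e1b : Dn n c'.1 c'.2 = (jd c').2 by [].
have hd' : Dn n c'.1 c'.2 < k by rewrite e1b e1 /=; case: ifP => _; lia.
rewrite /sC_pow /Cv; case hP: (_ || _).
- rewrite eqxx (@sC_jd n k g A HA c' hn hg hgk hd') e1a e1b e1 /TJD /jd /=.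
  move: hP; rewrite e1a e1 /= => ->.
  case: (Dn n c.1 c.2 =P 0) => h0 /=; congr pair; ifs; lia.
- have hneq : (((-1)%R : int) == 1%R) = false by []. rewrite hneq.
  rewrite (@sCinv_jd n k g A HA c' hn hg hgk hd') e1a e1b e1 /TJD /jd /=.
  move: hP; rewrite e1a e1 /= => ->.
  case: (Dn n c.1 c.2 =P 0) => h0 /=; congr pair; ifs; lia.
Qed.

Definition hop (k n V t : nat) : bool := (V + t == 0) || (V + t == k) || (V + t == n).
Definition TV (g k n : nat) (p : nat * nat) : nat * nat :=
  if hop k n p.1 p.2 then
    ((if p.2 == 0 then (if p.1 + g < n then p.1 + g else p.1 + g - n)
      else (if p.1.+1 < n then p.1.+1 else 0)), p.2)
  else (p.1, if p.2.+1 < k then p.2.+1 else 0).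
Definition reach (f : nat * nat -> nat * nat) x y := exists s, iter s f x = y.
Definition cyc (s t u : nat) : bool :=
  if s <= t then (s <= u) && (u < t) else (s <= u) || (u < t).

Lemma reach_refl f x : reach f x x. Proof. by exists 0. Qed.
Lemma reach_trans f x y z : reach f x y -> reach f y z -> reach f x z.
Proof. by move=> [a <-] [b <-]; exists (b + a); rewrite iterD. Qed.
Lemma reach_r f x y : reach f x y -> reach f x (f y).
Proof. by move=> [a <-]; exists a.+1. Qed.
Lemma reach_eq f x p q : reach f x p -> p = q -> reach f x q.
Proof. by move=> ? <-. Qed.

Lemma walk g k n V s t : s <= t -> t < k ->
  (forall u, s <= u < t -> ~~ hop k n V u) -> reach (TV g k n) (V, s) (V, t).
Proof.
move=> hst; elim: t hst => [|t IH] hst htk hu.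
  have -> : s = 0 by lia. exact: reach_refl.
case: (ltngtP s t.+1) => h; [|lia|by rewrite h; exact: reach_refl].
have := IH (ltac:(lia)) (ltac:(lia)) (fun u hu' => hu u (ltac:(lia))).
move/reach_r; rewrite /TV /= (negbTE (hu t (ltac:(lia)))) /=.
by case: ifP => //; lia.
Qed.

Lemma walkc g k n V s t : s < k -> t < k ->
  (forall u, u < k -> cyc s t u -> ~~ hop k n V u) -> reach (TV g k n) (V, s) (V, t).
Proof.
move=> hs ht hu; case: (leqP s t) => hst.
  apply: walk => // u hu'; apply: hu; first lia. by rewrite /cyc hst.
apply: (@reach_trans _ _ (V, k.-1)).
  apply: walk; [lia|lia|] => u hu'; apply: hu; first lia.
  rewrite /cyc (_ : (s <= t) = false); last lia. lia.
apply: (@reach_trans _ _ (V, 0)).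
  apply: (@reach_eq _ _ (TV g k n (V, k.-1))); first exact/reach_r/reach_refl.
  rewrite /TV /= (negbTE (hu k.-1 (ltac:(lia)) _)) /=.
    by case: ifP => //; lia.
  rewrite /cyc (_ : (s <= t) = false); last lia. lia.
apply: walk; [lia|lia|] => u hu'; apply: hu; first lia.
rewrite /cyc (_ : (s <= t) = false); last lia. lia.
Qed.

Lemma go g k n x0 V s t : reach (TV g k n) x0 (V, s) -> s < k -> t < k ->
  (forall u, u < k -> cyc s t u -> ~~ hop k n V u) -> reach (TV g k n) x0 (V, t).
Proof. by move=> r hs ht hu; apply: reach_trans r (walkc _ hs ht hu). Qed.

Lemma jmp g k n x0 V t : reach (TV g k n) x0 (V, t) -> hop k n V t -> 0 < t ->
  reach (TV g k n) x0 (if V.+1 < n then V.+1 else 0, t).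
Proof.
move=> r hh ht; apply: reach_eq (reach_r r) _.
by rewrite /TV /= hh (_ : (t == 0) = false) //; lia.
Qed.

Lemma jmp0 g k n x0 V : reach (TV g k n) x0 (V, 0) -> hop k n V 0 ->
  reach (TV g k n) x0 (if V + g < n then V + g else V + g - n, 0).
Proof. by move=> r hh; apply: reach_eq (reach_r r) _; rewrite /TV /= hh. Qed.

Ltac nohop := let u := fresh "u" in let hu := fresh "hu" in
  move=> u hu; rewrite /cyc /hop; ifs; lia.
Ltac ishop := rewrite /hop; lia.
Ltac ffs := first [done | lia | (let u := fresh "u" in let hu := fresh "hu" in let hh := fresh "hh" in move=> u hu hh; move: hh; rewrite /hop; lia) | (ifs; lia)].
Ltac fixp := congr pair; ifs; lia.

Lemma FF g k n x0 V s hpt : reach (TV g k n) x0 (V, s) -> hpt < k ->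
  (forall u, u < k -> hop k n V u -> u = hpt) -> s = (if hpt.+1 < k then hpt.+1 else 0) ->
  forall t, t < k -> reach (TV g k n) x0 (V, t).
Proof.
move=> r hp hu hs t ht; apply: (go r) => //; first by rewrite hs; case: ifP => ?; lia.
move=> u hu1 hc; apply/negP => /(hu u hu1) eu; move: hc; rewrite eu hs /cyc; ifs; lia.
Qed.

Lemma Vmain g k n h R : g = 2 * h + 1 -> 1 <= h -> k = g + 2 * R -> h < R -> n = k + g - 1 ->
  (forall V t, V < n -> t < k -> reach (TV g k n) (g, 0) (V, t)) /\ TV g k n (0, 0) = (g, 0).
Proof.
move=> hg hh hk hR hn.
set T := TV g k n.
have PA : forall r, r <= R -> reach T (g, 0) (g + 2 * r, if r == 0 then 0 else k - 2 * r).
  elim=> [_|r IH hr].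
    by apply: reach_eq (reach_refl _ _) _; fixp.
  have r1 := IH (ltac:(lia)).
  have r2 := go (t := k - g - 2 * r) r1 (ltac:(ifs; lia)) (ltac:(lia)) (ltac:(nohop)).
  have r3 := jmp r2 (ltac:(ishop)) (ltac:(lia)).
  have r4 := go (t := k - 2 - 2 * r) r3 (ltac:(lia)) (ltac:(lia)) (ltac:(nohop)).
  have r5 := jmp r4 (ltac:(ifs; ishop)) (ltac:(lia)).
  by apply: reach_eq r5 _; fixp.
have PA' : forall r, r < R -> reach T (g, 0) (g + 2 * r + 1, k - g - 2 * r).
  move=> r hr.
  have r1 := PA r (ltac:(lia)).
  have r2 := go (t := k - g - 2 * r) r1 (ltac:(ifs; lia)) (ltac:(lia)) (ltac:(nohop)).
  have r3 := jmp r2 (ltac:(ishop)) (ltac:(lia)).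
  by apply: reach_eq r3 _; fixp.
have PAe : reach T (g, 0) (1, 0).
  have r1 := PA R (ltac:(lia)).
  have r2 := go (t := 0) r1 (ltac:(ifs; lia)) (ltac:(lia)) (ltac:(nohop)).
  have r3 := jmp0 r2 (ltac:(ifs; ishop)).
  by apply: reach_eq r3 _; fixp.
have P1 : forall V, 1 <= V -> V <= g - 1 -> reach T (g, 0) (V, if V == 1 then 0 else k - V + 1).
  elim=> [|V IH] h1 h2; first lia.
  case: (V =P 0) => [->|hV0]; first exact: PAe.
  have r1 := IH (ltac:(lia)) (ltac:(lia)).
  have r2 := go (t := k - V) r1 (ltac:(ifs; lia)) (ltac:(lia)) (ltac:(nohop)).
  have r3 := jmp r2 (ltac:(ishop)) (ltac:(lia)).
  by apply: reach_eq r3 _; fixp.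
have P1e : reach T (g, 0) (g, k - g + 1).
  have r1 := P1 (g - 1) (ltac:(lia)) (ltac:(lia)).
  have r2 := go (t := k - (g - 1)) r1 (ltac:(ifs; lia)) (ltac:(lia)) (ltac:(nohop)).
  have r3 := jmp r2 (ltac:(ishop)) (ltac:(lia)).
  by apply: reach_eq r3 _; fixp.
have PB' : forall r, reach T (g, 0) (g + 2 * r, k - g - 2 * r + 1) -> r < R ->
    reach T (g, 0) (g + 2 * r + 1, k - 1 - 2 * r).
  move=> r r1 hr.
  have r2 := go (t := k - 1 - 2 * r) r1 (ltac:(lia)) (ltac:(lia)) (ltac:(nohop)).
  have r3 := jmp r2 (ltac:(ishop)) (ltac:(lia)).
  by apply: reach_eq r3 _; fixp.
have PB : forall r, r <= R -> reach T (g, 0) (g + 2 * r, k - g - 2 * r + 1).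
  elim=> [_|r IH hr].
    by apply: reach_eq P1e _; fixp.
  have r3 := PB' r (IH (ltac:(lia))) (ltac:(lia)).
  have r4 := go (t := k - g - 2 * r - 1) r3 (ltac:(lia)) (ltac:(lia)) (ltac:(nohop)).
  have r5 := jmp r4 (ltac:(ishop)) (ltac:(lia)).
  by apply: reach_eq r5 _; fixp.
have PBe : reach T (g, 0) (k + 1, g - 1).
  have r1 := PB R (ltac:(lia)).
  have r2 := go (t := g - 1) r1 (ltac:(lia)) (ltac:(lia)) (ltac:(nohop)).
  have r3 := jmp r2 (ltac:(ishop)) (ltac:(lia)).
  by apply: reach_eq r3 _; fixp.
have PC : forall i, k + 1 + i <= n - 1 -> reach T (g, 0) (k + 1 + i, g - 1 - i).
  elim=> [_|i IH hi].
    by apply: reach_eq PBe _; fixp.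
  have r1 := IH (ltac:(lia)).
  have r2 := go (t := g - 2 - i) r1 (ltac:(lia)) (ltac:(lia)) (ltac:(nohop)).
  have r3 := jmp r2 (ltac:(ishop)) (ltac:(lia)).
  by apply: reach_eq r3 _; fixp.
have PCe : reach T (g, 0) (0, 1).
  have r1 := PC (g - 3) (ltac:(lia)).
  have r2 := go (t := 1) r1 (ltac:(lia)) (ltac:(lia)) (ltac:(nohop)).
  have r3 := jmp r2 (ltac:(ishop)) (ltac:(lia)).
  by apply: reach_eq r3 _; fixp.
split; last by rewrite /T /TV /hop /=; ifs; fixp.
move=> V t hV ht.
case: (ltnP V 1) => hV1.
  have -> : V = 0 by lia.
  apply: (FF PCe (hpt := 0)); ffs.
case: (ltnP V g) => hVg.
  apply: (FF (P1 V (ltac:(lia)) (ltac:(lia))) (hpt := k - V)); ffs.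
case: (ltnP k V) => hVk.
  have e : V = k + 1 + (V - k - 1) by lia.
  rewrite e; apply: (FF (PC (V - k - 1) (ltac:(lia))) (hpt := n - V)); rewrite -?e; ffs.
have [r [hr|hr]] : exists r, V - g = 2 * r \/ V - g = 2 * r + 1 by exists (V - g)./2; lia.
- have -> : V = g + 2 * r by lia.
  case: (r =P 0) => [r0|rn0].
    case: (leqP t (k - g)) => htt.
      by apply: (go (PA r (ltac:(lia)))) => //; [ifs; lia| nohop].
    by apply: (go (PB r (ltac:(lia)))) => //; [lia| nohop].
  case: (leqP (k - 2 * r) t) => h1.
    by apply: (go (PA r (ltac:(lia)))) => //; [ifs; lia| nohop].
  case: (leqP t (k - g - 2 * r)) => h2.
    by apply: (go (PA r (ltac:(lia)))) => //; [ifs; lia| nohop].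
  by apply: (go (PB r (ltac:(lia)))) => //; [lia| nohop].
- have -> : V = g + 2 * r + 1 by lia.
  case: (leqP (k - g - 2 * r) t) => h1; last first.
    by apply: (go (PB' r (PB r (ltac:(lia))) (ltac:(lia)))) => //; [lia| nohop].
  case: (leqP t (k - 2 - 2 * r)) => h2.
    by apply: (go (PA' r (ltac:(lia)))) => //; [lia| nohop].
  by apply: (go (PB' r (PB r (ltac:(lia))) (ltac:(lia)))) => //; [lia| nohop].
Qed.

Definition jV g n V t := if t == 0 then (if g <= V then V - g else V + n - g)
  else (if V + t - 1 < n then V + t - 1 else V + t - 1 - n).
Definition dV k t := if t == 0 then 0 else if 2 * t < k then k - 2 * t else 2 * k - 2 * t.
Definition JV g k n (p : nat * nat) := (jV g n p.1 p.2, dV k p.2).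

Lemma link g k n V t : 3 <= g -> 2 * g < k -> odd k -> n = k + g - 1 -> V < n -> t < k ->
  TJD g k n (JV g k n (V, t)) = JV g k n (TV g k n (V, t)).
Proof.
move=> hg hk ok hn hV ht.
have [q hq] : exists q, k = 2 * q + 1 by exists k./2; move: (odd_double_half k); rewrite ok; lia.
have hVn : (V + t == n + k) = false by lia.
case: (t =P 0) => [t0|tn0].
  subst t; rewrite /JV /TJD /= /jV /dV /=.
  set j0 := (if g <= V then V - g else V + n - g).
  have ej' : (if j0 + g < n then j0 + g else j0 + g - n) = V by rewrite /j0; ifs; lia.
  rewrite ej' /TV /hop /= addn0.
  case: (V =P 0) => [V0|Vn0] /=.
    by rewrite V0 ?add0n (_ : g < n) //; last lia; ifs; congr pair; lia.
  rewrite (_ : (V == n) = false) ?orbF; last by lia.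
  case: (V =P k) => [Vk|Vnk] /=.
    congr pair; ifs; lia.
  rewrite (_ : 1 < k) //; last by lia.
  congr pair; ifs; lia.
have hd0 : (dV k t == 0) = false by rewrite /dV; ifs; lia.
have ej : jV g n V t = if V + t - 1 < n then V + t - 1 else V + t - 1 - n by rewrite /jV (_ : (t == 0) = false) //; lia.
rewrite /JV /TJD /= ej hd0.
set j' := (if (if V + t - 1 < n then _ else _).+1 < n then _ else _).
have ej' : j' = if V + t < n then V + t else V + t - n by rewrite /j'; ifs; lia.
have hh : hop k n V t = (j' == 0) || (j' == k) by rewrite ej' /hop; ifs; lia.
rewrite -hh /TV /= hh.
case: ((j' == 0) || (j' == k)) => /=.
  rewrite (_ : (t == 0) = false) /=; last by lia.
  congr pair.
  rewrite /jV (_ : (t == 0) = false) /= ?ej'; last by lia.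
  ifs; lia.
case: (ltnP t.+1 k) => htk.
  congr pair.
    by rewrite /jV /= ej'; ifs; lia.
  by rewrite /dV /=; ifs; lia.
congr pair.
  by rewrite /jV /= ej'; ifs; lia.
by rewrite /dV /=; ifs; lia.
Qed.

Lemma surj g k n j d : 3 <= g -> 2 * g < k -> odd k -> n = k + g - 1 -> j < n -> d < k ->
  exists V t, [/\ V < n, t < k & JV g k n (V, t) = (j, d)].
Proof.
move=> hg hk ok hn hj hd.
have [q hq] : exists q, k = 2 * q + 1 by exists k./2; move: (odd_double_half k); rewrite ok; lia.
case: (d =P 0) => [d0|dn0].
  exists (if j + g < n then j + g else j + g - n), 0; split; [ifs; lia|lia|].
  by rewrite /JV /jV /dV /= d0; congr pair; ifs; lia.
have [e [he|he]] : exists e, d = 2 * e \/ d = 2 * e + 1 by exists d./2; lia.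
  exists (if k - e <= j + 1 then j + 1 - (k - e) else j + 1 + n - (k - e)), (k - e); split; [ifs; lia|lia|].
  rewrite /JV /jV /dV /= (_ : (k - e == 0) = false); last by lia.
  congr pair; ifs; lia.
exists (if q - e <= j + 1 then j + 1 - (q - e) else j + 1 + n - (q - e)), (q - e); split; [ifs; lia|lia|].
rewrite /JV /jV /dV /= (_ : (q - e == 0) = false); last by lia.
congr pair; ifs; lia.
Qed.

Lemma TV_valid g k n V t : 0 < g -> n = k + g - 1 -> 1 < k -> V < n -> t < k ->
  (TV g k n (V, t)).1 < n /\ (TV g k n (V, t)).2 < k.
Proof. move=> *; rewrite /TV /=; ifs; rewrite /=; lia. Qed.

Lemma TJD_inj g k n p q : 3 <= g -> n = k + g - 1 -> 2 * g < k ->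
  p.1 < n -> p.2 < k -> q.1 < n -> q.2 < k -> TJD g k n p = TJD g k n q -> p = q.
Proof.
case: p => j1 d1; case: q => j2 d2 /= hg hn hk h1 h2 h3 h4.
rewrite /TJD /= => [[e1 e2]].
case: (d1 =P 0) => [z1|z1]; case: (d2 =P 0) => [z2|z2]; move: e1 e2; ifs => e1 e2; congr pair; lia.
Qed.

Lemma jd_inj n (c1 c2 : 'I_n * 'I_n) : jd c1 = jd c2 -> c1 = c2.
Proof.
case: c1 c2 => [i1 j1] [i2 j2]; rewrite /jd /= => [[e1 e2]].
have hi1 := ltn_ord i1; have hi2 := ltn_ord i2; have hj1 := ltn_ord j1; have hj2 := ltn_ord j2.
rewrite !Dval // -e1 in e2.
have ei : nat_of_ord i1 = i2 by move: e2; ifs; lia.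
by congr pair; apply: val_inj.
Qed.

Lemma TJD_lt g k n p : 2 < k -> p.2 < k -> (TJD g k n p).2 < k.
Proof. by case: p => j d /= hk hd; rewrite /TJD /=; ifs; lia. Qed.

Lemma iter_period (f : nat * nat -> nat * nat) N x a : iter N f x = x -> iter (N * a) f x = x.
Proof. by move=> hN; elim: a => [|a IH]; rewrite ?muln0 // mulnS iterD IH hN. Qed.

Lemma ar1 m g a b : m = 2 * a + 1 -> g = 2 * b + 1 -> 3 <= m -> 3 <= g ->
  [/\ m * g = 1 + (m - 1) * g + g - 1, 2 * g < 1 + (m - 1) * g,
      1 + (m - 1) * g = (a * g).*2.+1, 1 <= b & b < a * g - b /\ 1 + (m - 1) * g = g + 2 * (a * g - b)].
Proof.
move=> -> -> h1 h2.
have e : (2 * a + 1 - 1) = 2 * a by lia.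
rewrite e.
split; nia.
Qed.

Unset Implicit Arguments.
Theorem corollary5p6 (m g : nat) (A : {set 'I_(m * g) * 'I_(m * g)}) :
  odd m -> odd g -> 3 <= m -> 3 <= g ->
  cyc_diag (1 + (m - 1) * g) A ->
  exists R C : 'I_(m * g) -> int, is_solution A R C.
Proof.
move=> om og hm hg HA.
have [a ea] : exists a, m = 2 * a + 1 by exists m./2; move: (odd_double_half m); rewrite om; lia.
have [b eb] : exists b, g = 2 * b + 1 by exists g./2; move: (odd_double_half g); rewrite og; lia.
have [hn hk ek hb [hR ekR]] := ar1 ea eb hm hg.
set n := m * g in A HA hn *.
set k := 1 + (m - 1) * g in HA hn hk ek ekR *.
have ok : odd k by rewrite ek /= odd_double.
have hgk : g < k by lia.
have [Hreach Hx0] := @Vmain g k n b (a * g - b) eb hb ekR hR hn.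
have CNj := fun c hc => @CN_jd n k g A HA c hn hg hgk hc.
have memA : forall c : 'I_n * 'I_n, (c \in A) = (Dn n c.1 c.2 < k) by move=> c; rewrite HA.
have clos : forall c, c \in A -> CN A (fun _ => 1%R) (@Cv n k) c \in A.
  move=> c; rewrite !memA => hc.
  have := @TJD_lt g k n (jd c) (ltac:(lia)) hc.
  by rewrite -CNj.
exists (fun _ => 1%R), (@Cv n k); split => //.
- by move=> i; left.
- by move=> j; rewrite /Cv; case: ifP; [left|right].
- move=> x y hx hy e; apply: jd_inj.
  rewrite memA in hx; rewrite memA in hy.
  apply: (@TJD_inj g k n) => //; rewrite /jd /=; try exact: ltn_ord.
  by rewrite -!CNj // e.
move=> x y hx hy.
have hx' := hx; have hy' := hy; rewrite memA in hx'; rewrite memA in hy'.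
have [V1 [t1 [hV1 ht1 e1]]] := @surj g k n (jd x).1 (jd x).2 hg hk ok hn (ltn_ord _) hx'.
have [V2 [t2 [hV2 ht2 e2]]] := @surj g k n (jd y).1 (jd y).2 hg hk ok hn (ltn_ord _) hy'.
have tr : forall s, let p := iter s (TV g k n) (V1, t1) in
    [/\ p.1 < n, p.2 < k, iter s (CN A (fun _ => 1%R) (@Cv n k)) x \in A &
        jd (iter s (CN A (fun _ => 1%R) (@Cv n k)) x) = JV g k n p].
  elim=> [|s [IH1 IH2 IH3 IH4]]; first by split => //; rewrite e1; case: (jd x).
  rewrite /= ; set p := iter s _ _ in IH1 IH2 IH4 *.
  have [v1 v2] := @TV_valid g k n p.1 p.2 (ltac:(lia)) hn (ltac:(lia)) IH1 IH2.
  rewrite -surjective_pairing in v1 v2.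
  split => //; first exact: clos.
  rewrite CNj; last by rewrite -memA.
  rewrite IH4 (surjective_pairing p) link //.
have [a1 ea1] := Hreach V1 t1 hV1 ht1.
have [b1 eb1] := Hreach V2 t2 hV2 ht2.
have [c1 ec1] := Hreach 0 0 (ltac:(lia)) (ltac:(lia)).
have per : iter c1.+1 (TV g k n) (g, 0) = (g, 0) by rewrite iterS ec1 Hx0.
exists (b1 + c1.+1 * a1 - a1).
have hit : iter (b1 + c1.+1 * a1 - a1) (TV g k n) (V1, t1) = (V2, t2).
  rewrite -ea1 -iterD (_ : b1 + c1.+1 * a1 - a1 + a1 = b1 + c1.+1 * a1); last by have := @leq_pmull a1 c1.+1 (ltn0Sn _); lia.
  by rewrite iterD iter_period.
have [_ _ _ h4] := tr (b1 + c1.+1 * a1 - a1).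
apply: jd_inj; rewrite h4 hit e2; by case: (jd y).
Qed.
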